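(* Let $R>0$, $t\neq 0$, $c=\frac{1-t^2}{1+t^2}$, $s=\frac{2t}{1+t^2}$, and set $k=1$. Consider the trisector $$T=\{(x,y,z)\in\mathbb{R}^3:\ y^2-(xs-yc)^2+2z-1=0,\ \bigl(x^2-2z+R^2+1\bigr)^2-4R^2(x^2+y^2)=0\}.$$ Then this degree-eight trisector is reducible and splits into two algebraic space curves of degree four. These two quartic components intersect in exactly two real affine points, $$\Bigl(Rc,Rs,\tfrac{1-R^2s^2}{2}\Bigr)\quad\text{and}\quad\Bigl(-Rc,-Rs,\tfrac{1-R^2s^2}{2}\Bigr),$$ and each of these two points is an ordinary real node of the trisector.
   Context: This is the trisector at parameter value $k=1$ of the $x$-axis, the line through $(0,0,1)$ with direction $(c,s,0)$, and the circle of radius $R$ centered at $(0,0,k)$ in the plane $z=k$. An ordinary real node is a point where the curve is locally the union of two smooth branches with distinct tangent lines. *)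

(* Defs.v *)
From Stdlib Require Import Reals Lra List.
From Coquelicot Require Import Coquelicot.
Open Scope R_scope.

Definition pt := (R * R * R)%type.

Definition cpar (t : R) : R := (1 - t ^ 2) / (1 + t ^ 2).
Definition spar (t : R) : R := 2 * t / (1 + t ^ 2).

Definition trisector (Rad t : R) (p : pt) : Prop :=
  let '(x, y, z) := p in
  y ^ 2 - (x * spar t - y * cpar t) ^ 2 + 2 * z - 1 = 0 /\
  (x ^ 2 - 2 * z + Rad ^ 2 + 1) ^ 2 - 4 * Rad ^ 2 * (x ^ 2 + y ^ 2) = 0.

(* a polynomial is a finite list of monomials  coef * x^i * y^j * z^k *)
Definition poly3 := list (R * (nat * nat * nat)).

Definition eval3 (P : poly3) (p : pt) : R :=
  let '(x, y, z) := p in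
  fold_right (fun (m : R * (nat * nat * nat)) (acc : R) =>
    fst m * x ^ (fst (fst (snd m))) * y ^ (snd (fst (snd m))) * z ^ (snd (snd m)) + acc) 0 P.

Definition algebraic_set (S : pt -> Prop) : Prop :=
  exists L : list poly3, forall p, S p <-> List.Forall (fun P => eval3 P p = 0) L.

Definition irreducible_set (S : pt -> Prop) : Prop :=
  algebraic_set S /\ (exists p, S p) /\
  forall A B : pt -> Prop, algebraic_set A -> algebraic_set B ->
    (forall p, S p <-> A p \/ B p) ->
    (forall p, S p -> A p) \/ (forall p, S p -> B p).

Definition plane (a b c d : R) (p : pt) : Prop :=
  let '(x, y, z) := p in a * x + b * y + c * z = d.

Definition nonzero3 (a b c : R) : Prop := ~ (a = 0 /\ b = 0 /\ c = 0).

Definition curve_degree (C : pt -> Prop) (n : nat) : Prop :=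
  (exists a b c d (l : list pt), nonzero3 a b c /\ NoDup l /\ length l = n /\
     forall p, (C p /\ plane a b c d p) <-> In p l) /\
  (forall a b c d, nonzero3 a b c ->
     (exists l : list pt, forall p, C p /\ plane a b c d p -> In p l) ->
     forall l : list pt, NoDup l -> (forall p, In p l -> C p /\ plane a b c d p) ->
       (length l <= n)%nat).

Definition smooth_branch (gx gy gz : R -> R) (p : pt) (d : R) : Prop :=
  0 < d /\
  (forall (n : nat) (tau : R), -d <= tau <= d ->
     ex_derive_n gx n tau /\ ex_derive_n gy n tau /\ ex_derive_n gz n tau) /\
  (gx 0, gy 0, gz 0) = p /\
  (forall tau, -d <= tau <= d ->
     ~ (Derive gx tau = 0 /\ Derive gy tau = 0 /\ Derive gz tau = 0)) /\
  (forall t1 t2, -d <= t1 <= d -> -d <= t2 <= d ->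
     (gx t1, gy t1, gz t1) = (gx t2, gy t2, gz t2) -> t1 = t2).

Definition dist2 (p q : pt) : R :=
  let '(x1, y1, z1) := p in let '(x2, y2, z2) := q in
  (x1 - x2) ^ 2 + (y1 - y2) ^ 2 + (z1 - z2) ^ 2.

Definition not_parallel (u1 u2 u3 v1 v2 v3 : R) : Prop :=
  ~ (u2 * v3 - u3 * v2 = 0 /\ u3 * v1 - u1 * v3 = 0 /\ u1 * v2 - u2 * v1 = 0).

Definition ordinary_real_node (C : pt -> Prop) (p : pt) : Prop :=
  C p /\
  exists (eps d : R) (gx1 gy1 gz1 gx2 gy2 gz2 : R -> R),
    0 < eps /\
    smooth_branch gx1 gy1 gz1 p d /\ smooth_branch gx2 gy2 gz2 p d /\
    not_parallel (Derive gx1 0) (Derive gy1 0) (Derive gz1 0)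
                 (Derive gx2 0) (Derive gy2 0) (Derive gz2 0) /\
    forall q, dist2 q p < eps ^ 2 ->
      (C q <-> exists tau, -d < tau < d /\
                 (q = (gx1 tau, gy1 tau, gz1 tau) \/ q = (gx2 tau, gy2 tau, gz2 tau))).

(* Main.v *)
Require Import Defs.
From Stdlib Require Import Reals Lra Psatz List Classical.
From Coquelicot Require Import Coquelicot.
From mathcomp Require Import all_boot all_algebra.
From mathcomp Require Import Rstruct.
Import GRing.Theory Num.Theory.
Open Scope R_scope.

Lemma hP3 (a0 a1 a2 u : R) : (Poly [:: a0; a1; a2]).[u]%R = a0 + a1*u + a2*u^2.
Proof. rewrite horner_Poly /=. rewrite -!RmultE -!RplusE -R0E. ring. Qed.

Lemma hP5 (a0 a1 a2 a3 a4 u : R) : (Poly [:: a0; a1; a2; a3; a4]).[u]%R = a0 + a1*u + a2*u^2 + a3*u^3 + a4*u^4.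
Proof. rewrite horner_Poly /=. rewrite -!RmultE -!RplusE -R0E. ring. Qed.

Lemma poly_eq0_all (p : {poly R}) : (forall u : R, p.[u]%R = 0) -> p = 0%R.
Proof.
move=> H; apply/eqP; apply/negPn/negP => pn0.
have Ha : all (root p) [seq (i%:R : R)%R | i <- iota 0 (size p)].
  by apply/allP => x _; apply/rootP; rewrite H.
have Hu : uniq [seq (i%:R : R)%R | i <- iota 0 (size p)].
  rewrite map_inj_uniq ?iota_uniq // => m n /eqP; rewrite eqr_nat => /eqP //.
have := max_poly_roots pn0 Ha Hu.
by rewrite size_map size_iota ltnn.
Qed.

Definition toPoly (X Y Z : {poly R}) (P : poly3) : {poly R} :=
  foldr (fun m acc => (m.1%:P * X ^+ m.2.1.1 * Y ^+ m.2.1.2 * Z ^+ m.2.2 + acc)%R) 0%R P.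

Lemma toPoly_eval X Y Z P u : (toPoly X Y Z P).[u]%R = eval3 P (X.[u], Y.[u], Z.[u])%R.
Proof.
elim: P => [|[a [[i j] k]] P IH] /=; first by rewrite horner0.
rewrite hornerD !hornerM hornerC !horner_exp IH /= !RpowE //.
Qed.


Lemma not_Forall_ex {A} (Q : A -> Prop) (l : list A) :
  ~ List.Forall Q l -> exists x, In x l /\ ~ Q x.
Proof.
intros H. apply NNPP; intros H'. apply H. apply List.Forall_forall.
intros x Hx. apply NNPP; intros Hq. apply H'. exists x; auto.
Qed.

Lemma irr_param (X Y Z : {poly R}) (C : pt -> Prop) :
  algebraic_set C ->
  (forall p, C p <-> exists u, p = (X.[u], Y.[u], Z.[u])%R) -> irreducible_set C.
Proof.
intros Halg HC. split; [exact Halg|split].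
{ exists (X.[0], Y.[0], Z.[0])%R. apply HC. exists 0%R. reflexivity. }
intros A B [LA HA] [LB HB] HAB.
destruct (classic (forall u, A (X.[u], Y.[u], Z.[u])%R)) as [HAll|HnA].
{ left. intros p Cp. apply HC in Cp as [u ->]. apply HAll. }
destruct (classic (forall u, B (X.[u], Y.[u], Z.[u])%R)) as [HBll|HnB].
{ right. intros p Cp. apply HC in Cp as [u ->]. apply HBll. }
exfalso.
apply not_all_ex_not in HnA as [u1 Hu1]. apply not_all_ex_not in HnB as [u2 Hu2].
rewrite HA in Hu1. rewrite HB in Hu2.
apply not_Forall_ex in Hu1 as [P [HP1 HP2]].
apply not_Forall_ex in Hu2 as [Q [HQ1 HQ2]].
set p := toPoly X Y Z P. set q := toPoly X Y Z Q.
have Hpq : (p * q = 0)%R.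
{ apply poly_eq0_all => u. rewrite hornerM.
  have [Hu|Hu] : A (X.[u], Y.[u], Z.[u])%R \/ B (X.[u], Y.[u], Z.[u])%R.
  { apply HAB, HC. exists u; reflexivity. }
  - rewrite HA List.Forall_forall in Hu. rewrite /p (toPoly_eval X Y Z P u) (Hu P HP1).
    by rewrite mul0r.
  - rewrite HB List.Forall_forall in Hu. rewrite /q (toPoly_eval X Y Z Q u) (Hu Q HQ1).
    by rewrite mulr0. }
move/eqP: Hpq; rewrite mulf_eq0 => /orP [/eqP Hp|/eqP Hq].
- apply HP2. rewrite -(toPoly_eval X Y Z P u1) -/p Hp horner0. reflexivity.
- apply HQ2. rewrite -(toPoly_eval X Y Z Q u2) -/q Hq horner0. reflexivity.
Qed.

Lemma In_mem (s : seq R) x : (x \in s) -> In x s.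
Proof.
elim: s => [|y s IH] //=. rewrite in_cons => /orP [/eqP ->|H]; [by left|by right; auto].
Qed.

Lemma NoDup_uniq (s : seq R) : NoDup s -> uniq s.
Proof.
elim: s => [|y s IH] //= H. inversion H; subst. apply/andP; split; last by auto.
apply/negP => Hin. apply H2. by apply In_mem.
Qed.

Lemma size_len {A} (l : list A) : size l = length l.
Proof. by elim: l => //= x l ->. Qed.

Lemma sz_add (p q : {poly R}) n : (size p <= n)%N -> (size q <= n)%N -> (size (p + q)%R <= n)%N.
Proof. move=> Hp Hq. apply: (leq_trans (size_polyD _ _)). by rewrite geq_max Hp Hq. Qed.

Lemma sz_sc (a : R) (p : {poly R}) n : (size p <= n)%N -> (size (a%:P * p)%R <= n)%N.
Proof. move=> Hp. rewrite mul_polyC. exact: leq_trans (size_scale_leq _ _) Hp. Qed.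

Lemma sz_C (a : R) n : (1 <= n)%N -> (size (a%:P)%R <= n)%N.
Proof. move=> H. rewrite size_polyC. apply: leq_trans H. by case: (a != 0%R). Qed.

Lemma deg_upper (X Y Z : {poly R}) (C : pt -> Prop) (uc : pt -> R) :
  (size X <= 5)%N -> (size Y <= 5)%N -> (size Z <= 5)%N ->
  (forall p, C p <-> exists u, p = (X.[u], Y.[u], Z.[u])%R) ->
  (forall u, uc (X.[u], Y.[u], Z.[u])%R = u) ->
  forall a b cc d,
     (exists l : list pt, forall p, C p /\ plane a b cc d p -> In p l) ->
     forall l : list pt, NoDup l -> (forall p, In p l -> C p /\ plane a b cc d p) ->
       (length l <= 4)%coq_nat.
Proof.
move=> HX HY HZ HC Huc a b cc d [l0 Hl0] l Hl Hin.
set pl : {poly R} := (a%:P * X + b%:P * Y + cc%:P * Z - d%:P)%R.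
have Hs : (size pl <= 5)%N.
{ rewrite /pl. apply: sz_add; [apply: sz_add; [apply: sz_add|]|]; try exact: sz_sc.
  rewrite size_polyN. exact: sz_C. }
have Hev : forall u, pl.[u]%R = a * X.[u]%R + b * Y.[u]%R + cc * Z.[u]%R - d.
{ move=> u. rewrite /pl !(hornerD, hornerN, hornerM, hornerC). reflexivity. }
have Hpl : forall u, plane a b cc d (X.[u], Y.[u], Z.[u])%R <-> pl.[u]%R = 0.
{ move=> u. rewrite Hev /plane. split; intros; lra. }
case: (eqVneq pl 0%R) => Hp0.
- exfalso.
  set L := List.map (fun n => (X.[INR n], Y.[INR n], Z.[INR n])%R) (List.seq 0 (S (length l0))).
  have HND : NoDup L.
  { apply NoDup_map_NoDup_ForallPairs; last by apply seq_NoDup.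
    intros m n _ _ Hmn. apply INR_eq. rewrite -(Huc (INR m)) -(Huc (INR n)). by rewrite Hmn. }
  have Hinc : incl L l0.
  { intros p Hp. apply Hl0. apply in_map_iff in Hp as [n [<- _]]. split.
    - apply HC. eexists; reflexivity.
    - apply Hpl. by rewrite Hp0 horner0. }
  have := NoDup_incl_length HND Hinc. rewrite /L length_map length_seq. move=> HH. exact (Nat.nle_succ_diag_l _ HH).
- set rs := List.map uc l.
  have HND : NoDup rs.
  { apply NoDup_map_NoDup_ForallPairs; last by [].
    intros x y Hx Hy Hxy. destruct (Hin x Hx) as [Cx _]. destruct (Hin y Hy) as [Cy _].
    apply HC in Cx as [ux ->]. apply HC in Cy as [uy ->].
    rewrite !Huc in Hxy. by rewrite Hxy. }
  have Hall : all (root pl) rs.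
  { apply/allP => r /In_mem Hr. apply in_map_iff in Hr as [p [<- Hp]].
    destruct (Hin p Hp) as [Cp Pp]. apply HC in Cp as [u ->]. rewrite Huc.
    apply/rootP. by apply Hpl. }
  have := max_poly_roots Hp0 Hall (NoDup_uniq _ HND).
  rewrite /rs size_len length_map => H. have H2 := leq_trans H Hs. apply/leP. exact H2.
Qed.


Lemma is_derive_eqv (f : R -> R) x l l' : is_derive f x l -> l = l' -> is_derive f x l'.
Proof. by move=> H <-. Qed.

Lemma horner_is_derive (p : {poly R}) (x : R) :
  is_derive (fun y => p.[y]%R) x (p^`()).[x]%R.
Proof.
elim/poly_ind: p x => [|p c IH] x.
- apply (is_derive_ext (fun _ => 0)). { move=> t. by rewrite horner0. }
  rewrite deriv0 horner0. apply: is_derive_const.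
- apply (is_derive_ext (fun y => p.[y]%R * y + c)).
  { move=> t. by rewrite hornerMXaddC. }
  rewrite derivMXaddC hornerD hornerM hornerX.
  have H1 := is_derive_mult (fun y => p.[y]%R) (fun y => y) x _ _ (IH x) (is_derive_id x) Rmult_comm.
  have H2 := is_derive_plus _ _ x _ _ H1 (is_derive_const c x).
  apply (is_derive_eqv _ _ _ _ H2).
  rewrite -RplusE -RmultE. unfold plus, mult, one, zero; simpl. change (p^`().[x]%R * x + p.[x]%R * 1 + 0 = p.[x]%R + p^`().[x]%R * x). ring.
Qed.

Lemma horner_Derive_n (p : {poly R}) n x :
  Derive_n (fun y => p.[y]%R) n x = (p^`(n)).[x]%R.
Proof.
elim: n x => [|n IH] x /=; first by rewrite ?derivn0.
rewrite (Derive_ext _ (fun y => (p^`(n)).[y]%R)); last by apply IH.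
apply is_derive_unique, horner_is_derive.
Qed.

Lemma horner_ex_derive_n (p : {poly R}) n x :
  ex_derive_n (fun y => p.[y]%R) n x.
Proof.
case: n => [|n] //=.
apply (ex_derive_ext (fun y => (p^`(n)).[y]%R)).
{ move=> t. by rewrite horner_Derive_n. }
eexists. apply horner_is_derive.
Qed.

Lemma shift_smooth (p : {poly R}) (f : R -> R) (u0 : R) :
  (forall u, f u = p.[u]%R) -> forall n x, ex_derive_n (fun t => f (u0 + t)) n x.
Proof.
move=> Hf n x.
apply (ex_derive_n_ext (fun t => (p \Po ('X + u0%:P)).[t]%R)).
{ move=> t. rewrite horner_comp hornerD hornerX hornerC Hf. by rewrite addrC. }
apply horner_ex_derive_n.
Qed.


Ltac toR := match goal with |- ?a = ?b => change (@eq R a b) end.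

Definition vv (Rr e u : R) : R := e * (u ^ 2 - Rr ^ 2) / (2 * Rr).
Definition px (c s Rr e u : R) : R := u * c + vv Rr e u * s.
Definition py (c s Rr e u : R) : R := u * s - vv Rr e u * c.
Definition pz (c s Rr e u : R) : R := (1 - py c s Rr e u ^ 2 + vv Rr e u ^ 2) / 2.
Definition phi (c s Rr e u : R) : pt := (px c s Rr e u, py c s Rr e u, pz c s Rr e u).
Definition ucoord (c s : R) (p : pt) : R := let '(x, y, _) := p in x * c + y * s.
Definition vcoord (c s : R) (p : pt) : R := let '(x, y, _) := p in x * s - y * c.

Definition Xp (c s Rr e : R) : {poly R} := Poly [:: -(e*Rr*s)/2; c; e*s/(2*Rr)].
Definition Yp (c s Rr e : R) : {poly R} := Poly [:: e*Rr*c/2; s; -(e*c/(2*Rr))].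
Definition Zp (c s Rr e : R) : {poly R} :=
  let a := e / (2 * Rr) in
  Poly [:: (1 + a^2*Rr^4 - c^2*a^2*Rr^4)/2; -(s*c*a*Rr^2);
           (2*c^2*a^2*Rr^2 - 2*a^2*Rr^2 - s^2)/2; s*c*a; (a^2 - c^2*a^2)/2].

Lemma phi_poly c s Rr e u : Rr <> 0 ->
  phi c s Rr e u = ((Xp c s Rr e).[u], (Yp c s Rr e).[u], (Zp c s Rr e).[u])%R.
Proof.
intros HR. unfold phi, Xp, Yp, Zp. rewrite hP3 hP3 hP5.
unfold pz, px, py, vv. (apply pair_equal_spec; split; [apply pair_equal_spec; split|]); toR; field; auto.
Qed.

Lemma sizeX c s Rr e : (size (Xp c s Rr e) <= 5)%N.
Proof. exact: leq_trans (size_Poly _) _. Qed.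
Lemma sizeY c s Rr e : (size (Yp c s Rr e) <= 5)%N.
Proof. exact: leq_trans (size_Poly _) _. Qed.
Lemma sizeZ c s Rr e : (size (Zp c s Rr e) <= 5)%N.
Proof. exact: leq_trans (size_Poly _) _. Qed.

Lemma uc_phi c s Rr e u : c^2 + s^2 = 1 -> ucoord c s (phi c s Rr e u) = u.
Proof.
intros hcs. unfold ucoord, phi, px, py.
replace ((u * c + vv Rr e u * s) * c + (u * s - vv Rr e u * c) * s) with (u * (c^2+s^2)) by ring.
rewrite hcs; ring.
Qed.

Lemma vc_phi c s Rr e u : c^2 + s^2 = 1 -> vcoord c s (phi c s Rr e u) = vv Rr e u.
Proof.
intros hcs. unfold vcoord, phi, px, py.
replace ((u * c + vv Rr e u * s) * s - (u * s - vv Rr e u * c) * c) with (vv Rr e u * (c^2+s^2)) by ring.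
rewrite hcs; ring.
Qed.

Definition F1 (c s Rr e : R) : poly3 :=
  (c^2, (2%nat, 0%nat, 0%nat)) :: (2*c*s, (1%nat, 1%nat, 0%nat)) :: (s^2, (0%nat, 2%nat, 0%nat)) ::
  (-(2*Rr*e*s), (1%nat, 0%nat, 0%nat)) :: (2*Rr*e*c, (0%nat, 1%nat, 0%nat)) ::
  (-(Rr^2), (0%nat, 0%nat, 0%nat)) :: nil.
Definition F2 (c s : R) : poly3 :=
  (1, (0%nat, 2%nat, 0%nat)) :: (-(s^2), (2%nat, 0%nat, 0%nat)) :: (2*s*c, (1%nat, 1%nat, 0%nat)) ::
  (-(c^2), (0%nat, 2%nat, 0%nat)) :: (2, (0%nat, 0%nat, 1%nat)) :: (-1, (0%nat, 0%nat, 0%nat)) :: nil.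

Lemma evF1 c s Rr e x y z : eval3 (F1 c s Rr e) (x, y, z) = (x*c+y*s)^2 - Rr^2 - 2*Rr*e*(x*s-y*c).
Proof. simpl. ring. Qed.
Lemma evF2 c s x y z : eval3 (F2 c s) (x, y, z) = y^2 - (x*s-y*c)^2 + 2*z - 1.
Proof. simpl. ring. Qed.

Definition Ce (c s Rr e : R) (p : pt) : Prop :=
  List.Forall (fun P => eval3 P p = 0) (F1 c s Rr e :: F2 c s :: nil).

Lemma Ce_eqs c s Rr e x y z : Ce c s Rr e (x, y, z) <->
  (x*c+y*s)^2 - Rr^2 - 2*Rr*e*(x*s-y*c) = 0 /\ y^2 - (x*s-y*c)^2 + 2*z - 1 = 0.
Proof.
unfold Ce. rewrite !List.Forall_cons_iff evF1 evF2. split.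
- intros [H1 [H2 _]]; auto.
- intros [H1 H2]; auto.
Qed.

Lemma Ce_alg c s Rr e : algebraic_set (Ce c s Rr e).
Proof. exists (F1 c s Rr e :: F2 c s :: nil). intros p; reflexivity. Qed.

Lemma Ce_iff c s Rr e p : c^2 + s^2 = 1 -> 0 < Rr -> e * e = 1 ->
  Ce c s Rr e p <-> exists u, p = phi c s Rr e u.
Proof.
intros hcs hR he. destruct p as [[x y] z]. rewrite Ce_eqs. split.
- intros [H1 H2]. exists (x*c+y*s).
  assert (HV : vv Rr e (x*c+y*s) = x*s-y*c).
  { unfold vv. replace ((x*c+y*s)^2 - Rr^2) with (2*Rr*e*(x*s-y*c)) by lra.
    replace (e * (2 * Rr * e * (x * s - y * c)) / (2 * Rr)) with ((e*e)*(x*s-y*c)) by (field; lra).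
    rewrite he; ring. }
  unfold phi, pz, px, py. rewrite HV. (apply pair_equal_spec; split; [apply pair_equal_spec; split|]).
  + replace ((x * c + y * s) * c + (x * s - y * c) * s) with (x*(c^2+s^2)) by ring. rewrite hcs; ring.
  + replace ((x * c + y * s) * s - (x * s - y * c) * c) with (y*(c^2+s^2)) by ring. rewrite hcs; ring.
  + replace ((x * c + y * s) * s - (x * s - y * c) * c) with (y*(c^2+s^2)) by ring. rewrite hcs. lra.
- intros [u Hu].
  have Hu1 := f_equal (ucoord c s) Hu. have Hu2 := f_equal (vcoord c s) Hu.
  rewrite uc_phi in Hu1; auto. rewrite vc_phi in Hu2; auto. simpl in Hu1, Hu2.
  injection Hu as Hx Hy Hz. split.
  + rewrite Hu1 Hu2. unfold vv.
    replace (2*Rr*e*(e*(u^2-Rr^2)/(2*Rr))) with ((e*e)*(u^2-Rr^2)) by (field; lra).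
    rewrite he; ring.
  + rewrite Hu2 Hz Hy. unfold pz. field.
Qed.


Lemma T_iff c s Rr x y z : c^2 + s^2 = 1 ->
  (y ^ 2 - (x * s - y * c) ^ 2 + 2 * z - 1 = 0 /\
   (x ^ 2 - 2 * z + Rr ^ 2 + 1) ^ 2 - 4 * Rr ^ 2 * (x ^ 2 + y ^ 2) = 0) <->
  Ce c s Rr 1 (x, y, z) \/ Ce c s Rr (-1) (x, y, z).
Proof.
intros hcs. rewrite !Ce_eqs.
assert (Hxy : x^2+y^2 = (x*c+y*s)^2 + (x*s-y*c)^2).
{ replace ((x*c+y*s)^2 + (x*s-y*c)^2) with ((x^2+y^2)*(c^2+s^2)) by ring. rewrite hcs; ring. }
assert (HG : y ^ 2 - (x * s - y * c) ^ 2 + 2 * z - 1 = 0 ->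
   (x ^ 2 - 2 * z + Rr ^ 2 + 1) ^ 2 - 4 * Rr ^ 2 * (x ^ 2 + y ^ 2) =
   ((x*c+y*s)^2 - Rr^2 - 2*Rr*1*(x*s-y*c)) * ((x*c+y*s)^2 - Rr^2 - 2*Rr*(-1)*(x*s-y*c))).
{ intros H2. replace (x ^ 2 - 2 * z + Rr ^ 2 + 1) with ((x*c+y*s)^2 + Rr^2) by lra.
  rewrite Hxy. ring. }
split.
- intros [H2 H]. rewrite (HG H2) in H. apply Rmult_integral in H as [H|H]; auto.
- intros [[H1 H2]|[H1 H2]]; split; auto; rewrite (HG H2) H1; ring.
Qed.

Lemma vv_root Rr e u0 : u0^2 = Rr^2 -> vv Rr e u0 = 0.
Proof. intros H. unfold vv. rewrite H. unfold Rdiv. ring. Qed.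

Lemma phi_root c s Rr e e' u0 : u0^2 = Rr^2 -> phi c s Rr e u0 = phi c s Rr e' u0.
Proof. intros H. unfold phi, pz, px, py. rewrite !vv_root; auto. Qed.

Lemma phi_P c s Rr e : 0 < Rr -> phi c s Rr e Rr = (Rr * c, Rr * s, (1 - Rr ^ 2 * s ^ 2) / 2).
Proof. intros hR. unfold phi, pz, px, py. rewrite vv_root; [|ring]. f_equal; [f_equal|]; field. Qed.

Lemma phi_Pm c s Rr e : 0 < Rr -> phi c s Rr e (-Rr) = (- (Rr * c), - (Rr * s), (1 - Rr ^ 2 * s ^ 2) / 2).
Proof. intros hR. unfold phi, pz, px, py. rewrite vv_root; [|ring]. f_equal; [f_equal|]; field. Qed.

Lemma inter_iff c s Rr p : c^2 + s^2 = 1 -> 0 < Rr ->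
  Ce c s Rr 1 p /\ Ce c s Rr (-1) p <-> p = phi c s Rr 1 Rr \/ p = phi c s Rr 1 (-Rr).
Proof.
intros hcs hR. split.
- intros [H1 H2]. apply Ce_iff in H1 as [u Hu]; try lra. apply Ce_iff in H2 as [u' Hu']; try lra.
  have Hu1 := f_equal (ucoord c s) Hu'. have Hu2 := f_equal (vcoord c s) Hu'.
  rewrite Hu uc_phi // uc_phi // in Hu1. rewrite Hu vc_phi // vc_phi // in Hu2.
  subst u'. unfold vv in Hu2.
  assert (Hsq : u^2 = Rr^2).
  { assert (E: 1 * (u ^ 2 - Rr ^ 2) / (2 * Rr) * (2*Rr) = -1 * (u ^ 2 - Rr ^ 2) / (2 * Rr) * (2*Rr)) by (rewrite Hu2; ring).
    field_simplify in E; lra. }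
  assert (Hf : (u - Rr) * (u + Rr) = 0) by nra.
  apply Rmult_integral in Hf as [Hf|Hf]; [left|right]; rewrite Hu; f_equal; lra.
- intros [->| ->]; split; apply Ce_iff; try lra.
  + exists Rr; reflexivity.
  + exists Rr. apply phi_root; ring.
  + exists (-Rr); reflexivity.
  + exists (-Rr). apply phi_root; ring.
Qed.

Lemma not_incl c s Rr e : c^2 + s^2 = 1 -> 0 < Rr -> e * e = 1 ->
  ~ (forall p, Ce c s Rr e p -> Ce c s Rr (-e) p).
Proof.
intros hcs hR he H.
assert (Hin : Ce c s Rr e (phi c s Rr e 0)) by (apply Ce_iff; auto; exists 0; reflexivity).
have H2 := H _ Hin.
assert (Hb : Ce c s Rr 1 (phi c s Rr e 0) /\ Ce c s Rr (-1) (phi c s Rr e 0)).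
{ assert (e = 1 \/ e = -1) as [-> | ->] by (assert ((e-1)*(e+1) = 0) by nra; apply Rmult_integral in H0; lra).
  - split; auto.
  - split; auto. replace (- -1) with 1 in H2 by ring. auto. }
apply inter_iff in Hb; auto.
destruct Hb as [Hb|Hb]; have := f_equal (ucoord c s) Hb; rewrite !uc_phi //; lra.
Qed.


Lemma quad_roots A Rr u : u^2 + 2*A*u - Rr^2 = 0 ->
  u = -A + sqrt (A^2 + Rr^2) \/ u = -A - sqrt (A^2 + Rr^2).
Proof.
intros H. have Hq := sqrt_sqrt (A^2+Rr^2) ltac:(nra).
assert (Hf : (u + A - sqrt (A^2+Rr^2)) * (u + A + sqrt (A^2+Rr^2)) = 0) by nra.
apply Rmult_integral in Hf as [Hf|Hf]; [left|right]; lra.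
Qed.

Lemma quad_root1 A Rr : let u := -A + sqrt (A^2 + Rr^2) in u^2 + 2*A*u - Rr^2 = 0.
Proof. intros u. have Hq := sqrt_sqrt (A^2+Rr^2) ltac:(nra). unfold u. nra. Qed.
Lemma quad_root2 A Rr : let u := -A - sqrt (A^2 + Rr^2) in u^2 + 2*A*u - Rr^2 = 0.
Proof. intros u. have Hq := sqrt_sqrt (A^2+Rr^2) ltac:(nra). unfold u. nra. Qed.

Lemma plane_key c s Rr e u : c^2 + s^2 = 1 -> s <> 0 -> 0 < Rr -> e * e = 1 ->
  pz c s Rr e u = 1/2 <->
  (u^2 + 2*(Rr*e*(c+1)/s)*u - Rr^2 = 0 \/ u^2 + 2*(Rr*e*(c-1)/s)*u - Rr^2 = 0).
Proof.
intros hcs hs hR he.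
set v := vv Rr e u.
assert (E : 2 * pz c s Rr e u - 1 = (s*v + (c-1)*u) * (s*v + (c+1)*u)).
{ unfold pz, py. fold v.
  replace ((s * v + (c - 1) * u) * (s * v + (c + 1) * u)) with
    (v^2 - (u*s - v*c)^2 - (1 - (c^2+s^2))*(u^2+v^2)) by ring.
  rewrite hcs. field. }
assert (Ea : (2*Rr*e/s) * (s*v + (c+1)*u) = (e*e)*(u^2 - Rr^2) + 2*(Rr*e*(c+1)/s)*u).
{ unfold v, vv. field; lra. }
assert (Eb : (2*Rr*e/s) * (s*v + (c-1)*u) = (e*e)*(u^2 - Rr^2) + 2*(Rr*e*(c-1)/s)*u).
{ unfold v, vv. field; lra. }
rewrite he in Ea, Eb.
assert (Hk : 2*Rr*e/s <> 0).
{ unfold Rdiv. intros Hk. apply Rmult_integral in Hk as [Hk|Hk].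
  - apply Rmult_integral in Hk as [Hk|Hk]; [lra|]. rewrite Hk in he. lra.
  - apply Rinv_neq_0_compat in hs. auto. }
split.
- intros Hz. assert (Hp : (s*v + (c-1)*u) * (s*v + (c+1)*u) = 0) by lra.
  apply Rmult_integral in Hp as [Hp|Hp]; [right|left].
  + rewrite <- (Rmult_0_r (2*Rr*e/s)), <- Hp, Eb. ring.
  + rewrite <- (Rmult_0_r (2*Rr*e/s)), <- Hp, Ea. ring.
- intros [Hp|Hp].
  + assert (s*v + (c+1)*u = 0).
    { apply (Rmult_eq_reg_l (2*Rr*e/s)); auto. rewrite Ea. lra. }
    assert (2 * pz c s Rr e u - 1 = 0) by (rewrite E; rewrite H; ring). lra.
  + assert (s*v + (c-1)*u = 0).
    { apply (Rmult_eq_reg_l (2*Rr*e/s)); auto. rewrite Eb. lra. }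
    assert (2 * pz c s Rr e u - 1 = 0) by (rewrite E; rewrite H; ring). lra.
Qed.

Lemma AB_distinct A B Rr u : 0 < Rr -> A <> B ->
  u^2 + 2*A*u - Rr^2 = 0 -> u^2 + 2*B*u - Rr^2 = 0 -> False.
Proof.
intros hR hAB H1 H2. assert (H: 2*(A-B)*u = 0) by lra.
apply Rmult_integral in H as [H|H].
- apply Rmult_integral in H as [H|H]; lra.
- subst u. nra.
Qed.

Lemma deg_exists c s Rr e : c^2 + s^2 = 1 -> s <> 0 -> 0 < Rr -> e * e = 1 ->
  exists a b cc d (l : list pt), nonzero3 a b cc /\ NoDup l /\ length l = 4%nat /\
     forall p, (Ce c s Rr e p /\ plane a b cc d p) <-> In p l.
Proof.
intros hcs hs hR he.
set A := Rr*e*(c+1)/s. set B := Rr*e*(c-1)/s.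
have hAB : A <> B.
{ intros H. unfold A, B in H. assert (Rr*e*(c+1) = Rr*e*(c-1)).
  { apply (Rmult_eq_reg_r (/s)); [exact H|]. apply Rinv_neq_0_compat; auto. }
  assert (Rr * e = 0) by nra. apply Rmult_integral in H1 as [H1|H1]; [lra|]. rewrite H1 in he; lra. }
set r1 := -A + sqrt (A^2 + Rr^2). set r2 := -A - sqrt (A^2 + Rr^2).
set r3 := -B + sqrt (B^2 + Rr^2). set r4 := -B - sqrt (B^2 + Rr^2).
have h1 : r1^2 + 2*A*r1 - Rr^2 = 0 := quad_root1 A Rr.
have h2 : r2^2 + 2*A*r2 - Rr^2 = 0 := quad_root2 A Rr.
have h3 : r3^2 + 2*B*r3 - Rr^2 = 0 := quad_root1 B Rr.
have h4 : r4^2 + 2*B*r4 - Rr^2 = 0 := quad_root2 B Rr.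
have qa : 0 < sqrt (A^2 + Rr^2) by (apply sqrt_lt_R0; nra).
have qb : 0 < sqrt (B^2 + Rr^2) by (apply sqrt_lt_R0; nra).
have n12 : r1 <> r2 by (unfold r1, r2; lra).
have n34 : r3 <> r4 by (unfold r3, r4; lra).
have n13 : r1 <> r3 by (intros E; rewrite <- E in h3; exact (AB_distinct _ _ _ _ hR hAB h1 h3)).
have n14 : r1 <> r4 by (intros E; rewrite <- E in h4; exact (AB_distinct _ _ _ _ hR hAB h1 h4)).
have n23 : r2 <> r3 by (intros E; rewrite <- E in h3; exact (AB_distinct _ _ _ _ hR hAB h2 h3)).
have n24 : r2 <> r4 by (intros E; rewrite <- E in h4; exact (AB_distinct _ _ _ _ hR hAB h2 h4)).
exists 0, 0, 1, (1/2), (List.map (phi c s Rr e) (r1 :: r2 :: r3 :: r4 :: nil)).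
split; [unfold nonzero3; lra|]. split; [|split; [reflexivity|]].
- apply NoDup_map_NoDup_ForallPairs.
  + intros x y _ _ Hxy. have := f_equal (ucoord c s) Hxy. rewrite !uc_phi //.
  + repeat constructor; simpl; intuition.
- intros p. split.
  + intros [HC Hp]. apply Ce_iff in HC as [u ->]; auto; try lra.
    change (0 * px c s Rr e u + 0 * py c s Rr e u + 1 * pz c s Rr e u = 1/2) in Hp.
    assert (Hz : pz c s Rr e u = 1/2) by lra.
    apply plane_key in Hz; auto. fold A B in Hz.
    destruct Hz as [Hz|Hz]; apply quad_roots in Hz as [Hz|Hz]; rewrite Hz; simpl; tauto.
  + intros Hin. apply in_map_iff in Hin as [u [Hu Hin]]. rewrite <- Hu. split.
    * apply Ce_iff; auto; try lra. exists u; reflexivity.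
    * change (0 * px c s Rr e u + 0 * py c s Rr e u + 1 * pz c s Rr e u = 1/2).
      assert (pz c s Rr e u = 1/2); [|lra].
      apply plane_key; auto. simpl in Hin. fold A B.
      destruct Hin as [<-|[<-|[<-|[<-|[]]]]]; auto.
Qed.


Lemma dpx c s Rr e u0 tau : 0 < Rr ->
  Derive (fun t => px c s Rr e (u0 + t)) tau = c + s * (e * (u0 + tau) / Rr).
Proof.
intros hR. apply is_derive_unique. unfold px, vv. auto_derive; [auto|]. field; lra.
Qed.

Lemma dpy c s Rr e u0 tau : 0 < Rr ->
  Derive (fun t => py c s Rr e (u0 + t)) tau = s - c * (e * (u0 + tau) / Rr).
Proof.
intros hR. apply is_derive_unique. unfold py, vv. auto_derive; [auto|]. field; lra.
Qed.

Lemma branch_ok c s Rr e u0 : c^2 + s^2 = 1 -> 0 < Rr ->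
  smooth_branch (fun t => px c s Rr e (u0 + t)) (fun t => py c s Rr e (u0 + t))
    (fun t => pz c s Rr e (u0 + t)) (phi c s Rr e u0) 1.
Proof.
intros hcs hR.
have Hpp := fun u => phi_poly c s Rr e u ltac:(lra).
split; [lra|]. split; [|split; [|split]].
- intros n tau _. split; [|split].
  + apply (shift_smooth (Xp c s Rr e)). intros u. have := Hpp u. unfold phi. case. auto.
  + apply (shift_smooth (Yp c s Rr e)). intros u. have := Hpp u. unfold phi. case. auto.
  + apply (shift_smooth (Zp c s Rr e)). intros u. have := Hpp u. unfold phi. case. auto.
- unfold phi. rewrite Rplus_0_r. reflexivity.
- intros tau _ [H1 [H2 _]]. rewrite dpx in H1; auto. rewrite dpy in H2; auto.
  set k := e * (u0 + tau) / Rr in H1, H2.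
  assert (c * (c + s*k) + s * (s - c*k) = 1) by (rewrite <- hcs; ring).
  rewrite H1 H2 in H. lra.
- intros t1 t2 _ _ H.
  change (phi c s Rr e (u0 + t1) = phi c s Rr e (u0 + t2)) in H.
  have := f_equal (ucoord c s) H. rewrite !uc_phi //. lra.
Qed.

Lemma cs_bound c s x y z x0 y0 z0 : c^2 + s^2 = 1 ->
  (x*c + y*s - (x0*c + y0*s))^2 <= dist2 (x, y, z) (x0, y0, z0).
Proof.
intros hcs. unfold dist2.
assert (E : (x*c + y*s - (x0*c + y0*s))^2 + ((x-x0)*s - (y-y0)*c)^2 = ((x-x0)^2 + (y-y0)^2)*(c^2+s^2)) by ring.
rewrite hcs in E. have := pow2_ge_0 ((x-x0)*s - (y-y0)*c). have := pow2_ge_0 (z-z0). lra.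
Qed.

Lemma node c s Rr u0 (T : pt -> Prop) : c^2 + s^2 = 1 -> 0 < Rr -> u0^2 = Rr^2 ->
  (forall q, T q <-> Ce c s Rr 1 q \/ Ce c s Rr (-1) q) ->
  ordinary_real_node T (phi c s Rr 1 u0).
Proof.
intros hcs hR hu0 HT. split.
{ apply HT. left. apply Ce_iff; auto; try lra. exists u0; reflexivity. }
exists 1, 1,
  (fun t => px c s Rr 1 (u0 + t)), (fun t => py c s Rr 1 (u0 + t)), (fun t => pz c s Rr 1 (u0 + t)),
  (fun t => px c s Rr (-1) (u0 + t)), (fun t => py c s Rr (-1) (u0 + t)), (fun t => pz c s Rr (-1) (u0 + t)).
split; [lra|]. split; [apply branch_ok; auto|]. split.
{ rewrite (phi_root c s Rr 1 (-1)); auto. apply branch_ok; auto. }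
split.
- intros [_ [_ H3]]. rewrite !dpx in H3; auto. rewrite !dpy in H3; auto.
  replace ((c + s * (1 * (u0 + 0) / Rr)) * (s - c * (-1 * (u0 + 0) / Rr)) -
     (s - c * (1 * (u0 + 0) / Rr)) * (c + s * (-1 * (u0 + 0) / Rr)))
    with (2 * u0 / Rr * (c^2 + s^2)) in H3 by (field; lra).
  rewrite hcs in H3.
  assert (u0 = 0).
  { apply (Rmult_eq_reg_l (2 / Rr)); [|apply Rgt_not_eq, Rdiv_lt_0_compat; lra].
    rewrite Rmult_0_r. rewrite <- H3. field. lra. }
  subst u0. nra.
- intros q Hq. split.
  + intros HTq. apply HT in HTq.
    assert (Hb : forall e, e * e = 1 -> Ce c s Rr e q ->
              exists u, -1 < u - u0 < 1 /\ q = phi c s Rr e (u0 + (u - u0))).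
    { intros e he Hc. apply Ce_iff in Hc as [u ->]; auto; try lra. exists u.
      replace (u0 + (u - u0)) with u by ring. split; [|reflexivity].
      destruct (phi c s Rr 1 u0) as [[x0 y0] z0] eqn:E0.
      have Hu0 := uc_phi c s Rr 1 u0 hcs. rewrite E0 in Hu0. simpl in Hu0.
      have Hu := uc_phi c s Rr e u hcs.
      unfold phi in Hq |- *. unfold ucoord in Hu.
      have := cs_bound c s (px c s Rr e u) (py c s Rr e u) (pz c s Rr e u) x0 y0 z0 hcs.
      unfold phi in Hu. rewrite Hu Hu0. nra. }
    destruct HTq as [Hc|Hc].
    * destruct (Hb 1 ltac:(ring) Hc) as [u [Hu ->]]. exists (u - u0). split; auto.
    * destruct (Hb (-1) ltac:(ring) Hc) as [u [Hu ->]]. exists (u - u0). split; auto.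
  + intros [tau [_ [-> | ->]]]; apply HT; [left|right]; apply Ce_iff; auto; try lra;
      exists (u0 + tau); reflexivity.
Qed.


Lemma Ce_iff_poly c s Rr e p : c^2 + s^2 = 1 -> 0 < Rr -> e * e = 1 ->
  Ce c s Rr e p <-> exists u, p = ((Xp c s Rr e).[u], (Yp c s Rr e).[u], (Zp c s Rr e).[u])%R.
Proof.
intros hcs hR he. rewrite Ce_iff //. split; intros [u Hu]; exists u; rewrite Hu phi_poly //; lra.
Qed.

Lemma Ce_irr c s Rr e : c^2 + s^2 = 1 -> 0 < Rr -> e * e = 1 -> irreducible_set (Ce c s Rr e).
Proof.
intros hcs hR he. apply (irr_param (Xp c s Rr e) (Yp c s Rr e) (Zp c s Rr e)).
- apply Ce_alg.
- intros p. apply Ce_iff_poly; auto.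
Qed.

Lemma Ce_deg c s Rr e : c^2 + s^2 = 1 -> s <> 0 -> 0 < Rr -> e * e = 1 -> curve_degree (Ce c s Rr e) 4.
Proof.
intros hcs hs hR he. split.
- apply deg_exists; auto.
- intros a b cc d _. apply (deg_upper (Xp c s Rr e) (Yp c s Rr e) (Zp c s Rr e) _ (ucoord c s)).
  + apply sizeX. + apply sizeY. + apply sizeZ.
  + intros p. apply Ce_iff_poly; auto.
  + intros u. rewrite -phi_poly; [apply uc_phi; auto|lra].
Qed.

Theorem theorem6 (Rad t : R) (hR : 0 < Rad) (ht : t <> 0) :
  let c := cpar t in
  let s := spar t in
  let T := trisector Rad t in
  let P1 : pt := (Rad * c, Rad * s, (1 - Rad ^ 2 * s ^ 2) / 2) in
  let P2 : pt := (- (Rad * c), - (Rad * s), (1 - Rad ^ 2 * s ^ 2) / 2) in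
  (exists C1 C2 : pt -> Prop,
     irreducible_set C1 /\ irreducible_set C2 /\
     (forall p, T p <-> C1 p \/ C2 p) /\
     ~ (forall p, C1 p -> C2 p) /\ ~ (forall p, C2 p -> C1 p) /\
     curve_degree C1 4 /\ curve_degree C2 4 /\
     P1 <> P2 /\
     (forall p, C1 p /\ C2 p <-> p = P1 \/ p = P2)) /\
  ordinary_real_node T P1 /\ ordinary_real_node T P2.
Proof.
intros c s T P1 P2.
have ht2 : 1 + t^2 <> 0 by nra.
have hcs : c^2 + s^2 = 1 by (unfold c, s, cpar, spar; field; auto).
have hs : s <> 0.
{ unfold s, spar, Rdiv. intros H. apply Rmult_integral in H as [H|H].
  - lra.
  - apply (Rinv_neq_0_compat _ ht2 H). }
have HT : forall q, T q <-> Ce c s Rad 1 q \/ Ce c s Rad (-1) q.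
{ intros [[x y] z]. exact (T_iff c s Rad x y z hcs). }
have eP1 : P1 = phi c s Rad 1 Rad by (symmetry; apply phi_P; auto).
have eP2 : P2 = phi c s Rad 1 (-Rad) by (symmetry; apply phi_Pm; auto).
have he1 : 1 * 1 = 1 by ring.
have he2 : -1 * -1 = 1 by ring.
split; [|split].
- exists (Ce c s Rad 1), (Ce c s Rad (-1)).
  split; [apply Ce_irr; auto|]. split; [apply Ce_irr; auto|].
  split; [exact HT|]. split.
  { have := not_incl c s Rad 1 hcs hR he1. auto. }
  split.
  { have := not_incl c s Rad (-1) hcs hR he2. rewrite Ropp_involutive. auto. }
  split; [apply Ce_deg; auto|]. split; [apply Ce_deg; auto|]. split.
  + unfold P1, P2. intros H. injection H as H1 H2.
    assert (c = 0) by nra. assert (s = 0) by nra. nra.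
  + intros p. rewrite eP1 eP2. apply inter_iff; auto.
- rewrite eP1. apply node; auto.
- rewrite eP2. apply node; auto. ring.
Qed.
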